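(* Let $P$ be a finite poset and $R$ an indecomposable commutative unital ring. Then the group $\mathrm{Aut}(I^3(P,R))$ of $R$-linear algebra automorphisms of $I^3(P,R)$ is isomorphic to the automorphism group $\mathrm{Aut}(P)$ of the poset $P$.
   Context: A commutative ring $R$ is indecomposable if its only idempotents are $0$ and $1$. For a finite poset $P$, let $P^3_\le=\{(x,y,z)\in P^3: x\le y\le z\}$. The third partial flag incidence algebra $I^3(P,R)$ is the $R$-module of all functions $f:P^3_\le\to R$ (pointwise operations) with the (non-associative) multiplication $(fg)(x_1,x_2,x_3)=\sum f(x_1,y_1,y_2)\,g(y_1,y_2,x_3)$, the sum over all $y_1,y_2$ with $x_1\le y_1\le x_2\le y_2\le x_3$. *)

(* Defs.v *)
From HB Require Import structures.
From mathcomp Require Import all_boot all_order all_algebra.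
Set Implicit Arguments. Unset Strict Implicit. Unset Printing Implicit Defensive.
Import Order.TTheory GRing.Theory.
Local Open Scope ring_scope.

Definition indecomposable (R : comNzRingType) : Prop :=
  forall e : R, e * e = e -> e = 0 \/ e = 1.

Notation trip P :=
  {t : P * P * P | ((t.1.1 <= t.1.2)%O && (t.1.2 <= t.2)%O)}.

Notation I3 P R := {ffun trip P -> R}.

(* value of f at (x,y,z), extended by 0 outside P^3_<= (never used there) *)
Definition I3ev d (P : finPOrderType d) (R : comNzRingType) (f : I3 P R)
  (x y z : P) : R :=
  match @insub _ (fun t : P * P * P => ((t.1.1 <= t.1.2)%O && (t.1.2 <= t.2)%O))
           (trip P) (x, y, z) with
  | Some t => f t
  | None => 0
  end.

Definition I3mul d (P : finPOrderType d) (R : comNzRingType) (f g : I3 P R)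
  : I3 P R :=
  [ffun t : trip P =>
     let x1 := (val t).1.1 in let x2 := (val t).1.2 in let x3 := (val t).2 in
     \sum_(y1 : P) \sum_(y2 : P |
        [&& (x1 <= y1)%O, (y1 <= x2)%O, (x2 <= y2)%O & (y2 <= x3)%O])
        I3ev f x1 y1 y2 * I3ev g y1 y2 x3].

Definition is_I3_aut d (P : finPOrderType d) (R : comNzRingType)
  (phi : I3 P R -> I3 P R) : Prop :=
  [/\ (forall (a : R) (f g : I3 P R), 
        phi [ffun t => a * f t + g t] = [ffun t => a * phi f t + phi g t]),
      (forall f g : I3 P R, phi (I3mul f g) = I3mul (phi f) (phi g))
    & bijective phi].

Definition is_poset_aut d (P : finPOrderType d) (s : P -> P) : Prop :=
  bijective s /\ (forall x y : P, (s x <= s y)%O = (x <= y)%O).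

(* Main.v *)
Require Import Defs.
From HB Require Import structures.
From mathcomp Require Import all_boot all_order all_algebra.
Set Implicit Arguments. Unset Strict Implicit. Unset Printing Implicit Defensive.
Import Order.TTheory GRing.Theory.
Local Open Scope ring_scope.

Section Basics.
Variables (d : Order.disp_t) (P : finPOrderType d) (R : comNzRingType).
Local Notation T := (trip P).
Local Notation A := (I3 P R).
Implicit Types (f g h : A) (x y z a b c : P).

Definition valid x y z := ((x <= y)%O && (y <= z)%O).
Definition ev f x y z := I3ev f x y z.
Definition M f g := I3mul f g.
Definition E x y z : A := [ffun t : T => if val t == (x, y, z) then 1 else 0].
Definition sc (r : R) f : A := [ffun t => r * f t].
Definition z0 : A := [ffun _ => 0].

Lemma tripE (p : P * P * P) : (p.1.1, p.1.2, p.2) = p.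
Proof. by case: p => [[]]. Qed.

Lemma ev_cases x y z :
  (exists t : T, val t = (x, y, z) /\ forall f, ev f x y z = f t)
  \/ (~~ valid x y z /\ forall f, ev f x y z = 0).
Proof.
rewrite /ev /I3ev; case: insubP => [t Ht Hv|Hn].
  by left; exists t.
by right.
Qed.

Lemma ev_val f (t : T) : f t = ev f (val t).1.1 (val t).1.2 (val t).2.
Proof.
have [[t' [Hv ->]]|[Hn _]] := ev_cases (val t).1.1 (val t).1.2 (val t).2.
  by congr (f _); apply: val_inj; rewrite Hv tripE.
by move: Hn; rewrite /valid (valP t).
Qed.

Lemma ev_inv f x y z : ~~ valid x y z -> ev f x y z = 0.
Proof.
move=> Hn; have [[t [Hv _]]|[_ ->]] := ev_cases x y z => //.
by move: Hn; rewrite /valid -[x]/((x,y,z).1.1) -[y]/((x,y,z).1.2) -[z]/((x,y,z).2) -Hv (valP t).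
Qed.

Lemma ev_ext f g : (forall x y z, ev f x y z = ev g x y z) -> f = g.
Proof. by move=> H; apply/ffunP => t; rewrite !ev_val H. Qed.

Lemma ev_E a b c x y z :
  ev (E a b c) x y z = if ((x, y, z) == (a, b, c)) && valid x y z then 1 else 0.
Proof.
have [[t [Hv ->]]|[Hn ->]] := ev_cases x y z.
  rewrite ffunE Hv.
  have -> : valid x y z by move: (valP t); rewrite Hv.
  by rewrite andbT.
by rewrite (negbTE Hn) andbF.
Qed.

Lemma ev_sc r f x y z : ev (sc r f) x y z = r * ev f x y z.
Proof.
have [[t [Hv ->]]|[Hn ->]] := ev_cases x y z.
  by rewrite ffunE (ev_val f t) Hv.
by rewrite ev_inv // mulr0.
Qed.

Lemma ev_z0 x y z : ev z0 x y z = 0.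
Proof. by have [[t [Hv ->]]|[Hn ->]] := ev_cases x y z; rewrite ?ffunE. Qed.

Lemma ev_M f g x1 x2 x3 :
  ev (M f g) x1 x2 x3 =
  \sum_(y1 : P) \sum_(y2 : P | [&& (x1 <= y1)%O, (y1 <= x2)%O, (x2 <= y2)%O & (y2 <= x3)%O])
     ev f x1 y1 y2 * ev g y1 y2 x3.
Proof.
have [[t [Hv ->]]|[Hn ->]] := ev_cases x1 x2 x3.
  by rewrite ffunE /= Hv.
symmetry; apply: big1 => y1 _; apply: big1 => y2 /and4P [h1 h2 h3 h4].
by move: Hn; rewrite /valid (le_trans h1 h2) (le_trans h3 h4).
Qed.


Lemma pick1 (F : P -> P -> R) (C : P -> P -> bool) a :
  (forall y1 y2, C y1 y2 -> y1 != a -> F y1 y2 = 0) ->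
  \sum_(y1 : P) \sum_(y2 : P | C y1 y2) F y1 y2 = \sum_(y2 : P | C a y2) F a y2.
Proof.
move=> H; rewrite (bigD1 a) //= [X in _ + X]big1 ?addr0 // => y1 hy1.
by apply: big1 => y2 hC; apply: H.
Qed.

Lemma pick2 (F : P -> P -> R) (C : P -> P -> bool) a b :
  (forall y1 y2, C y1 y2 -> (y1 != a) || (y2 != b) -> F y1 y2 = 0) ->
  \sum_(y1 : P) \sum_(y2 : P | C y1 y2) F y1 y2 = if C a b then F a b else 0.
Proof.
move=> H; rewrite (pick1 (a:=a)); last by move=> y1 y2 hC hy; apply: H => //; rewrite hy.
case: (boolP (C a b)) => hC.
  rewrite (bigD1 b) //= [X in _ + X]big1 ?addr0 // => y2 /andP [hC' hy].
  by apply: H => //; rewrite hy orbT.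
apply: big1 => y2 hC'; apply: H => //; apply/orP; right.
by apply/eqP => e; move: hC; rewrite -e hC'.
Qed.

Lemma LE a b c f x1 x2 x3 :
  ev (M (E a b c) f) x1 x2 x3 =
  if [&& x1 == a, (a <= b)%O, (b <= x2)%O, (x2 <= c)%O & (c <= x3)%O] then ev f b c x3 else 0.
Proof.
rewrite ev_M (pick2 (a:=b) (b:=c)); last first.
  move=> y1 y2 _ hy; rewrite ev_E.
  suff -> : ((x1, y1, y2) == (a, b, c)) = false by rewrite mul0r.
  by rewrite !xpair_eqE; case/orP: hy => /negbTE ->; rewrite ?andbF ?andbT.
rewrite ev_E !xpair_eqE !eqxx !andbT /valid.
case: (x1 =P a) => [->|ne] /=; last by case: ifP => _ //; rewrite mul0r.
by case: ifP => // /and4P [h1 h2 h3 h4]; rewrite h1 (le_trans h2 h3) mul1r.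
Qed.

Lemma RE a b c f x1 x2 x3 :
  ev (M f (E a b c)) x1 x2 x3 =
  if [&& x3 == c, (x1 <= a)%O, (a <= x2)%O, (x2 <= b)%O & (b <= c)%O] then ev f x1 a b else 0.
Proof.
rewrite ev_M (pick2 (a:=a) (b:=b)); last first.
  move=> y1 y2 _ hy; rewrite ev_E.
  suff -> : ((y1, y2, x3) == (a, b, c)) = false by rewrite mulr0.
  by rewrite !xpair_eqE; case/orP: hy => /negbTE ->; rewrite ?andbF ?andbT.
rewrite ev_E !xpair_eqE !eqxx /valid /=.
case: (x3 =P c) => [->|ne] /=; last by case: ifP => _ //; rewrite mulr0.
by case: ifP => // /and4P [h1 h2 h3 h4]; rewrite h4 (le_trans h2 h3) mulr1.
Qed.


Lemma le_eq (x y : P) : (x <= y)%O -> (y <= x)%O -> x = y.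
Proof. by move=> h h'; apply: le_anti; rewrite h h'. Qed.

Lemma ev_M_diag f g x : ev (M f g) x x x = ev f x x x * ev g x x x.
Proof.
rewrite ev_M (pick2 (a:=x) (b:=x)) ?lexx //.
move=> y1 y2 /and4P [h1 h2 h3 h4].
by rewrite (le_eq h2 h1) (le_eq h4 h3) !eqxx.
Qed.

Lemma M_scl r f g : M (sc r f) g = sc r (M f g).
Proof.
apply: ev_ext => x y z; rewrite ev_sc !ev_M mulr_sumr; apply: eq_bigr => y1 _.
by rewrite mulr_sumr; apply: eq_bigr => y2 _; rewrite ev_sc mulrA.
Qed.

Lemma M_scr r f g : M f (sc r g) = sc r (M f g).
Proof.
apply: ev_ext => x y z; rewrite ev_sc !ev_M mulr_sumr; apply: eq_bigr => y1 _.
by rewrite mulr_sumr; apply: eq_bigr => y2 _; rewrite ev_sc mulrCA.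
Qed.

Ltac splitb :=
  repeat match goal with
  | H : is_true (_ && _) |- _ => case/andP: H => ? ?
  | H : (_ && _) = true |- _ => case/andP: H => ? ?
  end.

Ltac antis :=
  match goal with
  | n : ?u <> ?v, H1 : is_true (?u <= ?v)%O, H2 : is_true (?v <= ?u)%O |- _ =>
      exfalso; apply: n; exact: le_eq H1 H2
  | n : ?v <> ?u, H1 : is_true (?u <= ?v)%O, H2 : is_true (?v <= ?u)%O |- _ =>
      exfalso; apply: n; exact: le_eq H2 H1
  end.

Ltac solve_atom :=
  first [done | assumption | (apply: le_trans; eassumption)].

Ltac prove_true := repeat (apply/andP; split); solve_atom.

Ltac crunch :=
  rewrite ?ev_sc ?ev_E ?ev_z0 ?xpair_eqE /valid ?eqxx ?lexx /=;
  repeat (match goal with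
  | |- context [ (?u == ?v) ] => case: (u =P v) => [?|?]; subst
  end; rewrite ?eqxx ?lexx /=);
  repeat (case: ifP => //=); intros; splitb; try antis;
  rewrite ?mul1r ?mulr1 ?mul0r ?mulr0 //;
  try match goal with
  | H : ?c = false |- _ => rewrite (_ : c = true) in H; [done | prove_true]
  end.

Lemma eps_idem x : M (E x x x) (E x x x) = E x x x.
Proof. by apply: ev_ext => a b c; rewrite LE; by crunch. Qed.

Lemma LI1 x g : M (M (E x x x) g) (E x x x) = sc (ev g x x x) (E x x x).
Proof. apply: ev_ext => a b c; rewrite RE LE; by crunch. Qed.

Lemma LI2 x g : M (E x x x) (M (E x x x) g) = M (E x x x) g.
Proof. apply: ev_ext => a b c; rewrite !LE; by crunch. Qed.

Lemma LI3 x g : M (M g (E x x x)) (E x x x) = M g (E x x x).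
Proof. apply: ev_ext => a b c; rewrite !RE; by crunch. Qed.

Lemma LEps x z : (x <= z)%O -> M (E x x x) (E x x z) = E x x z.
Proof. move=> hxz; apply: ev_ext => a b c; rewrite LE; by crunch. Qed.

Lemma REps x z : (x <= z)%O -> M (E x z z) (E z z z) = E x z z.
Proof. move=> hxz; apply: ev_ext => a b c; rewrite RE; by crunch. Qed.

Lemma LI5 x z v k : v != z -> M (E x x z) (M k (E v v v)) = z0.
Proof. move=> /eqP hv; apply: ev_ext => a b c; rewrite LE RE; by crunch. Qed.

Lemma LI5' x z v k : v != x -> M (M (E v v v) k) (E x z z) = z0.
Proof. move=> /eqP hv; apply: ev_ext => a b c; rewrite RE LE; by crunch. Qed.

Lemma LI6 a b c : (a <= b)%O -> (b <= c)%O -> M (E a b b) (E b b c) = E a b c.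
Proof. move=> h1 h2; apply: ev_ext => x y z; rewrite LE; by crunch. Qed.

Lemma Q1 x z : (x <= z)%O -> M (E x x x) (M (E x x z) (E x z z)) = E x x z.
Proof. move=> h; apply: ev_ext => a b c; rewrite !LE; by crunch. Qed.

Lemma Q2 x z : (x <= z)%O -> M (M (E x x z) (E x z z)) (E z z z) = E x z z.
Proof. move=> h; apply: ev_ext => a b c; rewrite RE LE; by crunch. Qed.


Definition Eu (u : T) : A := E (val u).1.1 (val u).1.2 (val u).2.

Lemma expand f : f = [ffun t => \sum_(u : T) f u * Eu u t].
Proof.
apply/ffunP => t; rewrite ffunE (bigD1 t) //= big1 ?addr0.
  by rewrite /Eu ffunE tripE eqxx mulr1.
move=> u hu; rewrite /Eu ffunE tripE.
by case: eqP => [/val_inj e|_]; [by rewrite e eqxx in hu | rewrite mulr0].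
Qed.

Section Lin.
Variable phi : A -> A.
Hypothesis lin : forall (r : R) f g,
  phi [ffun t => r * f t + g t] = [ffun t => r * phi f t + phi g t].

Lemma phi0 : phi z0 = z0.
Proof.
have := lin 1 z0 z0.
have -> : [ffun t => 1 * z0 t + z0 t] = z0 by apply/ffunP => t; rewrite !ffunE mul1r addr0.
move=> /ffunP H; apply/ffunP => t; move: (H t); rewrite !ffunE mul1r => /eqP.
by rewrite -subr_eq0 opprD addrA subrr add0r oppr_eq0 => /eqP ->.
Qed.

Lemma phi_sc r f : phi (sc r f) = sc r (phi f).
Proof.
have := lin r f z0; rewrite phi0.
have -> : [ffun t => r * f t + z0 t] = sc r f by apply/ffunP => t; rewrite !ffunE addr0.
by move=> ->; apply/ffunP => t; rewrite !ffunE addr0.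
Qed.

Lemma phi_sum (I : Type) (r : seq I) (F : I -> A) :
  phi [ffun t => \sum_(i <- r) F i t] = [ffun t => \sum_(i <- r) phi (F i) t].
Proof.
elim: r => [|i r IH].
  have -> : [ffun t => \sum_(i <- [::]) F i t] = z0 by apply/ffunP => t; rewrite !ffunE big_nil.
  by rewrite phi0; apply/ffunP => t; rewrite !ffunE big_nil.
have -> : [ffun t => \sum_(j <- i :: r) F j t]
        = [ffun t => 1 * F i t + [ffun t => \sum_(j <- r) F j t] t].
  by apply/ffunP => t; rewrite !ffunE big_cons mul1r.
rewrite lin IH; apply/ffunP => t; rewrite !ffunE big_cons mul1r.
by [].
Qed.

Lemma phi_expand f : phi f = [ffun t => \sum_(u : T) f u * phi (Eu u) t].
Proof.
have E1 : f = [ffun t => \sum_(u : T) sc (f u) (Eu u) t].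
  apply/ffunP => t; rewrite ffunE (bigD1 t) //= [X in _ + X]big1 ?addr0.
    by rewrite /sc /Eu !ffunE tripE eqxx mulr1.
  move=> u hu; rewrite /sc /Eu !ffunE tripE.
  by case: eqP => [/val_inj e|_]; [by rewrite e eqxx in hu | rewrite mulr0].
rewrite {1}E1 phi_sum; apply/ffunP => t; rewrite !ffunE; apply: eq_bigr => u _.
by rewrite phi_sc /sc ffunE.
Qed.

End Lin.


Lemma pickin (F : P -> R) (C : P -> bool) b :
  (forall y2, C y2 -> y2 != b -> F y2 = 0) ->
  \sum_(y2 : P | C y2) F y2 = if C b then F b else 0.
Proof.
move=> H; case: (boolP (C b)) => hC.
  by rewrite (bigD1 b) //= big1 ?addr0 // => y2 /andP [hC' hy]; apply: H.
apply: big1 => y2 hC'; apply: H => //.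
by apply/eqP => e; move: hC; rewrite -e hC'.
Qed.

Lemma pick1r (F : P -> P -> R) (C : P -> P -> bool) b :
  (forall y1 y2, C y1 y2 -> y2 != b -> F y1 y2 = 0) ->
  \sum_(y1 : P) \sum_(y2 : P | C y1 y2) F y1 y2 = \sum_(y1 : P | C y1 b) F y1 b.
Proof.
move=> H; rewrite [RHS]big_mkcond; apply: eq_bigr => y1 _.
by rewrite (pickin (b:=b)) // => y2 hC hy; apply: H.
Qed.

Lemma wf_ind (r : rel P) (irr : irreflexive r) (tr : transitive r) (Q : P -> Prop) :
  (forall v, (forall w, r w v -> Q w) -> Q v) -> forall v, Q v.
Proof.
move=> H v; have [n] := ubnP #|[set w | r w v]|.
elim: n v => // n IH v hv; apply: H => w hw; apply: IH.
have h : (#|[set w' | r w' w]| < #|[set w | r w v]|)%N.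
  apply: proper_card; apply/properP; split.
    by apply/subsetP => w'; rewrite !inE => h; exact: tr h hw.
  by exists w; rewrite !inE ?hw ?irr.
by apply: leq_trans h _; rewrite -ltnS.
Qed.

Lemma sc1 f : sc 1 f = f.
Proof. by apply/ffunP => t; rewrite ffunE mul1r. Qed.

Lemma E_neq0 x y z : valid x y z -> E x y z != z0.
Proof.
move=> hv; apply/eqP => /(congr1 (fun f => ev f x y z)).
rewrite ev_E ev_z0 eqxx hv /= => /eqP; exact/negP/oner_neq0.
Qed.

Lemma eps_inj a b : E a a a = E b b b -> a = b.
Proof.
move=> /(congr1 (fun f => ev f a a a)); rewrite !ev_E eqxx /valid lexx /=.
by case: eqP => [[]|] // _ /= /eqP; rewrite oner_eq0.
Qed.

Definition PsiF (s : P -> P) (f : A) : A :=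
  [ffun w : T => \sum_(u : T | (s (val u).1.1, s (val u).1.2, s (val u).2) == val w) f u].

Lemma sum_val f (p : P * P * P) : \sum_(u : T | val u == p) f u = ev f p.1.1 p.1.2 p.2.
Proof.
have [[t0 [Ht0 ->]]|[Hn ->]] := ev_cases p.1.1 p.1.2 p.2.
  rewrite tripE in Ht0; rewrite (big_pred1 t0) // => u /=.
  by rewrite -Ht0 val_eqE.
rewrite big_pred0 // => u; apply/eqP => e; move: Hn.
by rewrite /valid -e (valP u).
Qed.

Section PsiS.
Variables (s g : P -> P).
Hypotheses (sg : cancel s g) (gs : cancel g s) (hs : forall x y, (s x <= s y)%O = (x <= y)%O).

Lemma hg x y : (g x <= g y)%O = (x <= y)%O.
Proof. by rewrite -hs !gs. Qed.

Lemma seqE x y : (s x == y) = (x == g y).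
Proof. by apply/eqP/eqP => [<-|->]; rewrite ?sg ?gs. Qed.

Lemma ev_Psi f a b c : ev (PsiF s f) a b c = ev f (g a) (g b) (g c).
Proof.
have [[t0 [Ht0 ->]]|[Hn ->]] := ev_cases a b c.
  rewrite ffunE (eq_bigl (fun u : T => val u == (g a, g b, g c))); first by rewrite sum_val.
  by move=> u; rewrite Ht0 !xpair_eqE !seqE -!xpair_eqE tripE.
by rewrite ev_inv // /valid !hg.
Qed.

Lemma Psi_M f h : PsiF s (M f h) = M (PsiF s f) (PsiF s h).
Proof.
apply: ev_ext => a b c; rewrite ev_Psi !ev_M (reindex_inj (can_inj gs)) /=.
apply: eq_bigr => y1 _; rewrite (reindex_inj (can_inj gs)) /=.
by apply: eq_big => [y2|y2 _]; rewrite ?hg // !ev_Psi.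
Qed.

Lemma Psi_lin r f h : PsiF s [ffun t => r * f t + h t] = [ffun t => r * PsiF s f t + PsiF s h t].
Proof.
apply/ffunP => w; rewrite !ffunE (eq_bigr (fun u => r * f u + h u)); last by move=> u _; rewrite ffunE.
by rewrite big_split mulr_sumr.
Qed.

End PsiS.

Definition tf (F : A -> A) (x : P) : P := odflt x [pick y | F (E x x x) == E y y y].

Section Aut.
Variables (phi psi : A -> A).
Hypotheses (Hphi : is_I3_aut phi) (Hpsi : is_I3_aut psi).
Hypotheses (phiK : cancel phi psi) (psiK : cancel psi phi).
Hypothesis hR : indecomposable R.

Lemma phiM f g : phi (M f g) = M (phi f) (phi g).
Proof. by case: Hphi. Qed.
Lemma psiM f g : psi (M f g) = M (psi f) (psi g).
Proof. by case: Hpsi. Qed.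
Lemma phiL r f g : phi [ffun t => r * f t + g t] = [ffun t => r * phi f t + phi g t].
Proof. by case: Hphi. Qed.
Lemma psiL r f g : psi [ffun t => r * f t + g t] = [ffun t => r * psi f t + psi g t].
Proof. by case: Hpsi. Qed.

Lemma idem01 (r : R) : r * r = r -> r != 0 -> r = 1.
Proof. by move=> /hR [->|->] //; rewrite eqxx. Qed.

Lemma aut_eps x : exists y, phi (E x x x) = E y y y.
Proof.
set u := phi (E x x x).
pose chi f := ev (psi f) x x x.
have chiM f g : chi (M f g) = chi f * chi g by rewrite /chi psiM ev_M_diag.
have chiu : chi u = 1 by rewrite /chi /u phiK ev_E eqxx /valid lexx.
have [y hy] : exists y, chi (E y y y) = 1.
  case: (boolP [exists y, chi (E y y y) != 0]) => [/existsP [y hy]|/existsPn hn].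
    by exists y; apply: idem01 => //; rewrite -chiM eps_idem.
  exfalso; move: chiu; rewrite /chi (phi_expand psiL u).
  have [[t0 [Ht0 ->]]|[Hn _]] := ev_cases x x x; last by rewrite /valid lexx in Hn.
  rewrite ffunE big1 => [/eqP|w _]; first by rewrite eq_sym oner_eq0.
  have [hab hbc] : ((val w).1.1 <= (val w).1.2)%O /\ ((val w).1.2 <= (val w).2)%O.
    by have := valP w => /andP.
  rewrite (ev_val (psi (Eu w)) t0) Ht0 /= -/(chi (Eu w)) /Eu.
  rewrite -(LI6 hab hbc) -(LEps hbc) !chiM.
  by move: (hn (val w).1.2); rewrite negbK => /eqP ->; rewrite mul0r mulr0 mulr0.
have KEY : M (M u (E y y y)) u = u.
  have := LI1 x (psi (E y y y)); rewrite -/(chi (E y y y)) hy sc1.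
  by move=> /(congr1 phi); rewrite !phiM psiK.
have KEY1 a b c : ev u a b c =
    if [&& (a <= y)%O, (y <= b)%O, (b <= y)%O & (y <= c)%O] then ev u a y y * ev u y y c else 0.
  rewrite -{1}KEY ev_M (pick2 (a:=y) (b:=y)).
    rewrite RE eqxx !lexx /=.
    by case: ifP => // /and4P [-> _ _ _].
  move=> y1 y2 /and4P [h1 h2 h3 h4] hne; rewrite RE.
  case: (y2 =P y) => [ey2|ny2] /=; last by rewrite mul0r.
  case: ifP => [/and4P [_ h5 h6 _]|_]; last by rewrite mul0r.
  by move: hne; rewrite ey2 (le_eq h6 h5) eqxx.
have He : ev u y y y = 1.
  have Hee : ev u y y y * ev u y y y = ev u y y y by rewrite {3}KEY1 !lexx.
  apply: idem01 => //; apply/eqP => e0.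
  have hb c : ev u y y c = 0 by rewrite KEY1 !lexx /= e0 mul0r; case: ifP.
  have : u = z0 by apply: ev_ext => a b c; rewrite KEY1 hb mulr0 ev_z0; case: ifP.
  rewrite /u -(phi0 phiL) => /(can_inj phiK) /eqP.
  by rewrite (negbTE (E_neq0 _)) // /valid lexx.
have EQb x2 v : (y <= x2)%O -> (x2 <= v)%O ->
    \sum_(w | (x2 <= w)%O && (w <= v)%O) ev u y y w * ev u y y v = ev u y y v.
  move=> h1 h2.
  have := LI2 x (psi (E y v v)); move/(congr1 phi); rewrite !phiM psiK -/u.
  move/(congr1 (fun f => ev f y x2 v)).
  rewrite RE eqxx !lexx h1 h2 /= ev_M (pick1 (a:=y)); last first.
    move=> y1 y2 _ hne; rewrite KEY1; case: ifP => [/and4P [_ h3 h4 _]|_]; last by rewrite mul0r.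
    by move: hne; rewrite (le_eq h4 h3) eqxx.
  move=> H; apply: (etrans _ H); apply: eq_big => [w|w /andP [hw1 hw2]].
    by rewrite !lexx h1.
  by rewrite RE eqxx !lexx (le_trans h1 hw1) hw2.
have EQa x2 v : (v <= x2)%O -> (x2 <= y)%O ->
    \sum_(w | (v <= w)%O && (w <= x2)%O) ev u v y y * ev u w y y = ev u v y y.
  move=> h1 h2.
  have := LI3 x (psi (E v v y)); move/(congr1 phi); rewrite !phiM psiK -/u.
  move/(congr1 (fun f => ev f v x2 y)).
  rewrite LE eqxx !lexx h1 h2 /= ev_M (pick1r (b:=y)); last first.
    move=> y1 y2 _ hne; rewrite (KEY1 y1); case: ifP => [/and4P [_ h3 h4 _]|_]; last by rewrite mulr0.
    by move: hne; rewrite (le_eq h4 h3) eqxx.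
  move=> H; apply: (etrans _ H); apply: eq_big => [w|w /andP [hw1 hw2]].
    by rewrite !lexx h2 !andbT.
  by rewrite LE eqxx !lexx hw1 (le_trans hw2 h2).
have b0 : forall v, v != y -> ev u y y v = 0.
  apply: (wf_ind (r := <%O)) => [w|w1 w2 w3|v IH hv]; [exact: ltxx| exact: lt_trans| ].
  case: (boolP (y <= v)%O) => hyv; last by rewrite ev_inv // /valid lexx.
  have h1 := EQb v v hyv (lexx v).
  rewrite (big_pred1 v) in h1; last by move=> w; rewrite /= eq_le andbC.
  have h2 := EQb y v (lexx y) hyv.
  rewrite (bigD1 y) ?lexx ?hyv //= (bigD1 v) ?hyv ?lexx ?hv //= big1 ?addr0 in h2; last first.
    move=> w /andP [/andP [/andP [hw1 hw2] hwy] hwv].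
    by rewrite IH ?mul0r // lt_neqAle hwv hw2.
  rewrite He mul1r h1 in h2.
  by have := congr1 (fun r => r - ev u y y v) h2; rewrite addrK subrr.
have a0 : forall v, v != y -> ev u v y y = 0.
  apply: (wf_ind (r := fun a b => (b < a)%O)) => [w|w1 w2 w3 h h'|v IH hv]; [exact: ltxx| exact: lt_trans h' h| ].
  case: (boolP (v <= y)%O) => hvy; last by rewrite ev_inv // /valid lexx andbT.
  have h1 := EQa v v (lexx v) hvy.
  rewrite (big_pred1 v) in h1; last by move=> w; rewrite /= eq_le andbC.
  have h2 := EQa y v hvy (lexx y).
  rewrite (bigD1 v) ?lexx ?hvy //= (bigD1 y) ?hvy ?lexx 1?eq_sym ?hv //= big1 ?addr0 in h2; last first.
    move=> w /andP [/andP [/andP [hw1 hw2] hwv] hwy].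
    by rewrite (IH w) ?mulr0 // lt_neqAle eq_sym hwv hw1.
  rewrite He mulr1 h1 in h2.
  by have := congr1 (fun r => r - ev u v y y) h2; rewrite addrK subrr.
exists y; apply: ev_ext => a b c; rewrite KEY1 ev_E.
case: ifP => [/and4P [h1 h2 h3 h4]|hn].
  have eb := le_eq h3 h2; rewrite eb.
  case: (a =P y) => [ea|/eqP na]; last first.
    by rewrite a0 // mul0r !xpair_eqE (negbTE na).
  case: (c =P y) => [ec|/eqP nc]; last first.
    by rewrite b0 // mulr0 !xpair_eqE (negbTE nc) !andbF.
  by rewrite ea ec He mulr1 eqxx /valid lexx.
case: eqP => // [[ea eb ec]]; move: hn; rewrite ea eb ec lexx //.
Qed.

End Aut.

Section Main.
Variables (phi psi : A -> A).
Hypotheses (Hphi : is_I3_aut phi) (Hpsi : is_I3_aut psi).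
Hypotheses (phiK : cancel phi psi) (psiK : cancel psi phi).
Hypothesis hR : indecomposable R.
Local Notation t := (tf phi).
Local Notation t' := (tf psi).

Lemma tE x : phi (E x x x) = E (t x) (t x) (t x).
Proof.
rewrite /tf; case: pickP => [y /eqP //|H].
have [y hy] := aut_eps Hphi Hpsi phiK psiK hR x.
by move: (H y); rewrite hy eqxx.
Qed.

Lemma t'E x : psi (E x x x) = E (t' x) (t' x) (t' x).
Proof.
rewrite /tf; case: pickP => [y /eqP //|H].
have [y hy] := aut_eps Hpsi Hphi psiK phiK hR x.
by move: (H y); rewrite hy eqxx.
Qed.

Lemma tK : cancel t t'.
Proof. by move=> x; apply: eps_inj; rewrite -t'E -tE phiK. Qed.

Lemma t'K : cancel t' t.
Proof. by move=> x; apply: eps_inj; rewrite -tE -t'E psiK. Qed.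

Lemma phiE2 x z : (x <= z)%O ->
  [/\ (t x <= t z)%O, phi (E x x z) = E (t x) (t x) (t z) & phi (E x z z) = E (t x) (t z) (t z)].
Proof.
move=> hxz.
have phi0' := phi0 (phiL Hphi).
set g := phi (E x x z); set h := phi (E x z z).
have G1 a b c : ev g a b c =
    if [&& a == t x, (t x <= b)%O, (b <= t x)%O & (t x <= c)%O] then ev g (t x) (t x) c else 0.
  have := LEps hxz; move/(congr1 phi); rewrite (phiM Hphi) tE -/g => H.
  by rewrite -{1}H LE lexx.
have G2 w : w != t z -> ev g (t x) (t x) w = 0.
  move=> hw.
  have hv : t' w != z by apply: contra hw => /eqP <-; rewrite t'K.
  have := LI5 x (psi (E (t x) w w)) hv; move/(congr1 phi).
  rewrite phi0' !(phiM Hphi) psiK tE t'K -/g => H.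
  have := congr1 (fun f => ev f (t x) (t x) w) H; rewrite ev_z0 ev_M (pick2 (a:=t x) (b:=w)); last first.
    move=> y1 y2 /and4P [h1 h2 h3 h4] hne; rewrite RE.
    case: ifP => [/and5P [_ _ h5 h6 _]|_]; last by rewrite mulr0.
    by move: hne; rewrite (le_eq h2 h1) (le_eq h6 h5) !eqxx.
  rewrite !lexx /=; case: (boolP (t x <= w)%O) => htw /=; last by rewrite ev_inv // /valid lexx.
  by rewrite RE eqxx htw !lexx /= ev_E eqxx /valid htw lexx /= mulr1.
have H1 a b c : ev h a b c =
    if [&& c == t z, (a <= t z)%O, (t z <= b)%O & (b <= t z)%O] then ev h a (t z) (t z) else 0.
  have := REps hxz; move/(congr1 phi); rewrite (phiM Hphi) tE -/h => H.
  by rewrite -{1}H RE lexx andbT.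
have H2 w : w != t x -> ev h w (t z) (t z) = 0.
  move=> hw.
  have hv : t' w != x by apply: contra hw => /eqP <-; rewrite t'K.
  have := LI5' z (psi (E w w (t z))) hv; move/(congr1 phi).
  rewrite phi0' !(phiM Hphi) psiK tE t'K -/h => H.
  have := congr1 (fun f => ev f w (t z) (t z)) H; rewrite ev_z0 ev_M (pick2 (a:=w) (b:=t z)); last first.
    move=> y1 y2 /and4P [h1 h2 h3 h4] hne; rewrite LE.
    case: ifP => [/and5P [_ _ h5 h6 _]|_]; last by rewrite mul0r.
    by move: hne; rewrite (le_eq h6 h5) (le_eq h4 h3) !eqxx.
  rewrite !lexx /= andbT; case: (boolP (w <= t z)%O) => htw /=; last by rewrite ev_inv // /valid (negbTE htw).
  by rewrite LE eqxx htw !lexx /= ev_E eqxx /valid htw lexx /= mul1r.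
have Ez0 a b c : valid a b c -> phi (E a b c) != z0.
  move=> hv; apply/eqP; rewrite -phi0' => /(can_inj phiK) /eqP.
  by rewrite (negbTE (E_neq0 hv)).
set c0 := ev g (t x) (t x) (t z).
set h0 := ev h (t x) (t z) (t z).
have Hg0 : c0 != 0.
  apply/eqP => e0; have : g = z0.
    apply: ev_ext => a b c; rewrite G1 ev_z0; case: ifP => // _.
    case: (c =P t z) => [->|/eqP nc]; [exact: e0| exact: G2].
  by move/eqP; apply/negP/Ez0; rewrite /valid lexx hxz.
have Hh0 : h0 != 0.
  apply/eqP => e0; have : h = z0.
    apply: ev_ext => a b c; rewrite H1 ev_z0; case: ifP => // _.
    case: (a =P t x) => [->|/eqP na]; [exact: e0| exact: H2].
  by move/eqP; apply/negP/Ez0; rewrite /valid lexx hxz.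
have htxz : (t x <= t z)%O.
  by case: (boolP (t x <= t z)%O) => // hn; move: Hg0; rewrite /c0 ev_inv ?eqxx // /valid lexx (negbTE hn).
have gE : g = sc c0 (E (t x) (t x) (t z)).
  apply: ev_ext => a b c; rewrite ev_sc ev_E G1.
  case: ifP => [/and4P [/eqP ea h1 h2 h3]|hn].
    rewrite ea (le_eq h2 h1); case: (c =P t z) => [->|/eqP nc].
      by rewrite eqxx /valid lexx htxz mulr1.
    by rewrite G2 // !xpair_eqE (negbTE nc) !andbF mulr0.
  case: eqP => [[ea eb ec]|_]; last by rewrite mulr0.
  by move: hn; rewrite ea eb ec eqxx lexx htxz.
have hE : h = sc h0 (E (t x) (t z) (t z)).
  apply: ev_ext => a b c; rewrite ev_sc ev_E H1.
  case: ifP => [/and4P [/eqP ec h1 h2 h3]|hn].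
    rewrite ec (le_eq h3 h2); case: (a =P t x) => [->|/eqP na].
      by rewrite eqxx /valid lexx htxz mulr1.
    by rewrite H2 // !xpair_eqE (negbTE na) mulr0.
  case: eqP => [[ea eb ec]|_]; last by rewrite mulr0.
  by move: hn; rewrite ea eb ec eqxx lexx htxz.
have e1 : c0 * h0 = c0.
  have := Q1 hxz; move/(congr1 phi); rewrite !(phiM Hphi) tE -/g -/h.
  rewrite {1}gE hE M_scl !M_scr (Q1 htxz) gE.
  move/(congr1 (fun f => ev f (t x) (t x) (t z))).
  by rewrite !ev_sc ev_E eqxx /valid lexx htxz /= !mulr1.
have e2 : c0 * h0 = h0.
  have := Q2 hxz; move/(congr1 phi); rewrite !(phiM Hphi) tE -/g -/h.
  rewrite gE {1}hE M_scl M_scr !M_scl (Q2 htxz) hE.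
  move/(congr1 (fun f => ev f (t x) (t z) (t z))).
  by rewrite !ev_sc ev_E eqxx /valid lexx htxz /= !mulr1.
have ch : c0 = h0 by rewrite -{1}e1 e2.
have c01 : c0 = 1 by apply: idem01 => //; rewrite {2}ch e1.
have h01 : h0 = 1 by rewrite -ch.
split => //; [rewrite gE c01 sc1 | rewrite hE h01 sc1]. all: reflexivity. Qed.

Lemma phiE a b c : (a <= b)%O -> (b <= c)%O -> phi (E a b c) = E (t a) (t b) (t c).
Proof.
move=> h1 h2; rewrite -(LI6 h1 h2) (phiM Hphi).
have [ha _ ->] := phiE2 h1; have [hb -> _] := phiE2 h2.
by rewrite LI6.
Qed.

Lemma t_mono x z : (x <= z)%O -> (t x <= t z)%O.
Proof. by move=> h; case: (phiE2 h). Qed.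

Lemma phi_Psi f : phi f = PsiF t f.
Proof.
rewrite (phi_expand (phiL Hphi) f); apply/ffunP => w; rewrite !ffunE [RHS]big_mkcond.
apply: eq_bigr => u _; have /andP [h1 h2] := valP u.
rewrite /Eu (phiE h1 h2) ffunE eq_sym.
by case: ifP; rewrite ?mulr1 ?mulr0.
Qed.

End Main.
End Basics.

Theorem corollary3p20 (d : Order.disp_t) (P : finPOrderType d)
  (R : comNzRingType) (hR : indecomposable R) :
  exists Psi : (P -> P) -> (I3 P R -> I3 P R),
    [/\ forall s, is_poset_aut s -> is_I3_aut (Psi s),
        forall s t, is_poset_aut s -> is_poset_aut t ->
          Psi (s \o t) =1 Psi s \o Psi t,
        forall s t, is_poset_aut s -> is_poset_aut t ->
          Psi s =1 Psi t -> s =1 t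
      & forall phi, is_I3_aut phi -> exists2 s, is_poset_aut s & Psi s =1 phi].
Proof.
exists (@PsiF d P R); split.
- move=> s [[g sg gs] hs]; split.
  + by move=> r f h; rewrite Psi_lin.
  + by move=> f h; rewrite (Psi_M sg gs hs).
  + exists (PsiF g) => f; apply: ev_ext => a b c.
      by rewrite (ev_Psi gs sg (hg gs hs)) (ev_Psi sg gs hs) !sg.
    by rewrite (ev_Psi sg gs hs) (ev_Psi gs sg (hg gs hs)) !gs.
- move=> s1 s2 [[g1 sg1 gs1] hs1] [[g2 sg2 gs2] hs2] f /=.
  have sg : cancel (s1 \o s2) (g2 \o g1) by move=> x /=; rewrite sg1 sg2.
  have gs : cancel (g2 \o g1) (s1 \o s2) by move=> x /=; rewrite gs2 gs1.
  have hs : forall x y, ((s1 \o s2) x <= (s1 \o s2) y)%O = (x <= y)%O by move=> x y /=; rewrite hs1 hs2.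
  apply: ev_ext => a b c.
  by rewrite (ev_Psi sg gs hs) (ev_Psi sg1 gs1 hs1) (ev_Psi sg2 gs2 hs2).
- move=> s1 s2 [[g1 sg1 gs1] hs1] [[g2 sg2 gs2] hs2] H x.
  have := congr1 (fun f => ev f (s1 x) (s1 x) (s1 x)) (H (@E _ _ R x x x)).
  rewrite (ev_Psi sg1 gs1 hs1) (ev_Psi sg2 gs2 hs2) sg1 !ev_E eqxx /valid lexx /= !xpair_eqE.
  case: (g2 (s1 x) =P x) => [e _|_ /=]; first by rewrite -{2}e gs2.
  move=> /eqP h; exfalso; case/negP: (@oner_neq0 R); exact: h.
- move=> phi Hphi; have Hphi' := Hphi; case: Hphi' => lin mul [psi phiK psiK].
  have Hpsi : is_I3_aut psi.
    split.
    + move=> r f g; apply: (can_inj phiK); rewrite psiK lin.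
      by apply/ffunP => w; rewrite !ffunE !psiK.
    + by move=> f g; apply: (can_inj phiK); rewrite psiK mul !psiK.
    + by exists phi.
  exists (tf phi).
    split; first by exists (tf psi); [exact: (tK Hphi Hpsi phiK psiK hR) | exact: (t'K Hphi Hpsi phiK psiK hR)].
    move=> x y; apply/idP/idP; last exact: (t_mono Hphi Hpsi phiK psiK hR).
    move=> h; rewrite -(tK Hphi Hpsi phiK psiK hR x) -(tK Hphi Hpsi phiK psiK hR y).
    exact: (t_mono Hpsi Hphi psiK phiK hR).
  by move=> f; rewrite (phi_Psi Hphi Hpsi phiK psiK hR).
Qed.
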